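(* Let $K$ be a field of characteristic different from $2$ and $3$, let $L$ be a perfect Lie algebra ($[L,L]=L$), let $A$ be an associative commutative algebra with unit, assume at least one of $L$, $A$ is finite-dimensional, and let $D$ be a Lie subalgebra of $\operatorname{Der}(A)$. Consider the Lie algebra $(L\otimes A)\oplus D$ with brackets $[x\otimes a,y\otimes b]=[x,y]\otimes ab$, $[d,x\otimes a]=x\otimes d(a)$ and the bracket of $D$ ($x,y\in L$, $a,b\in A$, $d\in D$). Then $$Z^2_{comm}((L\otimes A)\oplus D)\cong Z^2_{comm}(L)\otimes X\ \oplus\ C(L)\otimes Y\ \oplus\ Z^2_{comm}(D),$$ where $X=\{\chi\in A^*:\chi(d(a)b-ad(b))=0\text{ for all } a,b\in A,\ d\in D\}$ and $Y=\{\beta\in HC^1(A):\beta(d(a),b)-\beta(a,d(b))=0\text{ for all } a,b\in A,\ d\in D\}$.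
   Context: $Z^2_{comm}(\mathfrak L)$ is the space of symmetric bilinear forms $\varphi$ on a Lie algebra $\mathfrak L$ with $\varphi([x,y],z)+\varphi([z,x],y)+\varphi([y,z],x)=0$ for all $x,y,z$. $C(L)$ is the space of skew-symmetric bilinear forms $\psi$ on $L$ with $\psi([x,y],z)=\psi([z,x],y)$ for all $x,y,z\in L$. $HC^1(A)$ is the space of skew-symmetric bilinear forms $\alpha$ on $A$ with $\alpha(ab,c)+\alpha(ca,b)+\alpha(bc,a)=0$ for all $a,b,c\in A$. *)

(* Defs.v *)
From HB Require Import structures.
From mathcomp Require Import all_boot all_order all_algebra.
From mathcomp Require Import boolp functions.
Set Implicit Arguments. Unset Strict Implicit. Unset Printing Implicit Defensive.
Import GRing.Theory.
Local Open Scope ring_scope.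

Section Defs.
Variable K : fieldType.

Definition lin_on (U W : lmodType K) (S : U -> Prop) (f : U -> W) :=
  forall k u u', S u -> S u' -> f (k *: u + u') = k *: f u + f u'.

Definition bilin_on (U V W : lmodType K) (S1 : U -> Prop) (S2 : V -> Prop)
    (f : U -> V -> W) :=
  (forall k u u' v, S1 u -> S1 u' -> S2 v -> f (k *: u + u') v = k *: f u v + f u' v) /\
  (forall k u v v', S1 u -> S2 v -> S2 v' -> f u (k *: v + v') = k *: f u v + f u v').

Definition bilin (U V W : lmodType K) (f : U -> V -> W) :=
  bilin_on (fun _ => True) (fun _ => True) f.

Definition is_lie (L : lmodType K) (br : L -> L -> L) :=
  [/\ bilin br, (forall x, br x x = 0) &
      (forall x y z, br x (br y z) + br y (br z x) + br z (br x y) = 0)].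

Definition perfect (L : lmodType K) (br : L -> L -> L) :=
  forall x, exists n (u v : 'I_n -> L), x = \sum_(i < n) br (u i) (v i).

Definition findim (V : lmodType K) :=
  exists n (e : 'I_n -> V), forall v, exists c : 'I_n -> K, v = \sum_(i < n) c i *: e i.

(* (T, tau) is a tensor product of the subspaces S1 of U and S2 of V
   (universal property; tau(S1 x S2) spans T). *)
Definition is_tensor (U V T : lmodType K) (S1 : U -> Prop) (S2 : V -> Prop)
    (tau : U -> V -> T) :=
  [/\ bilin_on S1 S2 tau,
      (forall t, exists n (u : 'I_n -> U) (v : 'I_n -> V),
          (forall i, S1 (u i) /\ S2 (v i)) /\ t = \sum_(i < n) tau (u i) (v i)) &
      (forall (W : lmodType K) (beta : U -> V -> W), bilin_on S1 S2 beta ->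
          exists f : T -> W, lin_on (fun _ => True) f /\
            forall u v, S1 u -> S2 v -> f (tau u v) = beta u v)].

Definition Z2comm (g : lmodType K) (br : g -> g -> g) (phi : g -> g -> K^o) :=
  [/\ bilin phi, (forall x y, phi x y = phi y x) &
      (forall x y z, phi (br x y) z + phi (br z x) y + phi (br y z) x = 0)].

Definition Cform (L : lmodType K) (br : L -> L -> L) (psi : L -> L -> K^o) :=
  [/\ bilin psi, (forall x y, psi x y = - psi y x) &
      (forall x y z, psi (br x y) z = psi (br z x) y)].

Definition HC1 (A : comAlgType K) (alpha : A -> A -> K^o) :=
  [/\ bilin alpha, (forall a b, alpha a b = - alpha b a) &
      (forall a b c, alpha (a * b) c + alpha (c * a) b + alpha (b * c) a = 0)].

Definition is_derivation (A : comAlgType K) (d : A -> A) :=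
  lin_on (fun _ => True) d /\ (forall a b, d (a * b) = d a * b + a * d b).

(* D (with bracket brD) is a Lie subalgebra of Der(A), given through the
   injective Lie-algebra map rho : D -> Der(A) (inclusion). *)
Definition der_subalg (A : comAlgType K) (D : lmodType K) (brD : D -> D -> D)
    (rho : D -> A -> A) :=
  [/\ lin_on (fun _ => True) rho, injective rho,
      (forall d, is_derivation (rho d)) &
      (forall d e a, rho (brD d e) a = rho d (rho e a) - rho e (rho d a))].

Definition Xset (A : comAlgType K) (D : lmodType K) (rho : D -> A -> A)
    (chi : A -> K^o) :=
  lin_on (fun _ => True) chi /\
  (forall a b d, chi (rho d a * b - a * rho d b) = 0).

Definition Yset (A : comAlgType K) (D : lmodType K) (rho : D -> A -> A)
    (beta : A -> A -> K^o) :=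
  HC1 beta /\ (forall a b d, beta (rho d a) b - beta a (rho d b) = 0).

Definition semidirect_bracket (L : lmodType K) (brL : L -> L -> L)
    (A : comAlgType K) (D : lmodType K) (brD : D -> D -> D) (rho : D -> A -> A)
    (T : lmodType K) (tau : L -> A -> T)
    (br : (T * D)%type -> (T * D)%type -> (T * D)%type) :=
  [/\ bilin br,
      (forall x y a b, br (tau x a, 0) (tau y b, 0) = (tau (brL x y) (a * b), 0)),
      (forall d x a, br (0, d) (tau x a, 0) = (tau x (rho d a), 0)),
      (forall d x a, br (tau x a, 0) (0, d) = (- tau x (rho d a), 0)) &
      (forall d e, br (0, d) (0, e) = (0, brD d e))].

Definition lin_iso_on (U W : lmodType K) (S : U -> Prop) (S' : W -> Prop)
    (f : U -> W) :=
  [/\ lin_on S f,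
      (forall u u', S u -> S u' -> f u = f u' -> u = u') &
      (forall w, S' w <-> exists u, S u /\ f u = w)].

End Defs.

(* Main.v *)
Require Import Defs.
From HB Require Import structures.
From mathcomp Require Import all_boot all_order all_algebra.
From mathcomp Require Import boolp functions.
From mathcomp Require Import ring.
Import GRing.Theory.
Local Open Scope ring_scope.

Module Aux.
Set Implicit Arguments. Unset Strict Implicit. Unset Printing Implicit Defensive.

Section Gen.
Variable K : fieldType.

Definition lin {U W : lmodType K} (f : U -> W) := lin_on (fun _ => True) f.

Lemma lin0 (U W : lmodType K) (f : U -> W) : lin f -> f 0 = 0.
Proof.
move=> H; have := H 1 0 0 I I; rewrite !scale1r addr0 => e.
by apply: (addrI (f 0)); rewrite addr0 -e.
Qed.

Lemma linD (U W : lmodType K) (f : U -> W) : lin f -> forall u v, f (u + v) = f u + f v.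
Proof. by move=> H u v; have := H 1 u v I I; rewrite !scale1r. Qed.

Lemma linZ (U W : lmodType K) (f : U -> W) : lin f -> forall k u, f (k *: u) = k *: f u.
Proof. by move=> H k u; have := H k u 0 I I; rewrite !addr0 (lin0 H) addr0. Qed.

Lemma linN (U W : lmodType K) (f : U -> W) : lin f -> forall u, f (- u) = - f u.
Proof. by move=> H u; rewrite -scaleN1r linZ // scaleN1r. Qed.

Lemma linB (U W : lmodType K) (f : U -> W) : lin f -> forall u v, f (u - v) = f u - f v.
Proof. by move=> H u v; rewrite linD // linN. Qed.

Lemma lin_sum (U W : lmodType K) (f : U -> W) n (g : 'I_n -> U) :
  lin f -> f (\sum_(i < n) g i) = \sum_(i < n) f (g i).
Proof.
move=> H; elim/big_rec2: _ => [|i y1 y2 _ <-]; first exact: lin0.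
exact: linD.
Qed.

Lemma linI (U W : lmodType K) (f : U -> W) :
  (forall u v, f (u + v) = f u + f v) -> (forall k u, f (k *: u) = k *: f u) -> lin f.
Proof. by move=> HD HZ k u v _ _; rewrite HD HZ. Qed.

Lemma bilin1 (U V W : lmodType K) (f : U -> V -> W) : bilin f -> forall v, lin (fun u => f u v).
Proof. by case=> H _ v k u u' _ _; apply: H. Qed.
Lemma bilin2 (U V W : lmodType K) (f : U -> V -> W) : bilin f -> forall u, lin (f u).
Proof. by case=> _ H u k v v' _ _; apply: H. Qed.
Lemma bilinI (U V W : lmodType K) (f : U -> V -> W) :
  (forall v, lin (fun u => f u v)) -> (forall u, lin (f u)) -> bilin f.
Proof. by move=> H1 H2; split=> k u u1 v *; [apply: (H1 v) | apply: (H2 u)]. Qed.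

End Gen.


Section Tens.
Variable K : fieldType.

Lemma lin_fun (U W : lmodType K) (f g : U -> W) k : lin f -> lin g -> lin (k *: f + g).
Proof.
move=> Hf Hg c u v _ _.
rewrite !addrfctE !scalrfctE /=.
rewrite (linD Hf) (linD Hg) (linZ Hf) (linZ Hg).
by rewrite !scalerDr !scalerA [c * k]mulrC addrACA.
Qed.

Lemma lin_cst0 (U W : lmodType K) : lin (fun _ : U => (0 : W)).
Proof. by move=> *; rewrite scaler0 addr0. Qed.

Lemma lin_add (U W : lmodType K) (f g : U -> W) : lin f -> lin g -> lin (f + g).
Proof. by move=> Hf Hg; rewrite -[f]scale1r; apply: lin_fun. Qed.

Variables (L A T : lmodType K) (tau : L -> A -> T).
Hypothesis htau : is_tensor (fun _ => True) (fun _ => True) tau.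

Lemma tau_bilin : bilin tau.
Proof. by case: htau. Qed.

Lemma T_ind (P : T -> Prop) : P 0 -> (forall u v, P u -> P v -> P (u + v)) ->
  (forall x a, P (tau x a)) -> forall t, P t.
Proof.
move=> P0 PD Pg t; case: htau => _ /(_ t) [n [u [v [_ ->]]]] _.
by elim/big_ind: _.
Qed.

Lemma lin_eqT (W : lmodType K) (f g : T -> W) : lin f -> lin g ->
  (forall x a, f (tau x a) = g (tau x a)) -> f = g.
Proof.
move=> Hf Hg H; apply/funext => t; elim/T_ind: t => [|u v eu ev|//].
  by rewrite (lin0 Hf) (lin0 Hg).
by rewrite (linD Hf) (linD Hg) eu ev.
Qed.

Lemma lin_univ (W : lmodType K) (beta : L -> A -> W) : bilin beta ->
  {f : T -> W | lin f /\ forall x a, f (tau x a) = beta x a}.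
Proof.
move=> Hb; apply: cid; case: htau => _ _ /(_ W beta Hb) [f [Hf Hfe]].
by exists f; split => // x a; apply: Hfe.
Qed.

Lemma mk_form (F : L -> A -> L -> A -> K^o) :
  (forall y b, bilin (fun x a => F x a y b)) -> (forall x a, bilin (F x a)) ->
  exists B : T -> T -> K^o, bilin B /\
    forall x a y b, B (tau x a) (tau y b) = F x a y b.
Proof.
move=> H1 H2.
pose g x a := proj1_sig (lin_univ (H2 x a)).
have gl x a : lin (g x a) by rewrite /g; case: lin_univ => ? [].
have ge x a y b : g x a (tau y b) = F x a y b by rewrite /g; case: lin_univ => ? [].
have Hg : bilin g.
  split.
  - move=> k x x' a _ _ _; apply: lin_eqT => //; first exact: lin_fun.
    move=> y c; rewrite addrfctE scalrfctE /= !ge.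
    exact: (bilin1 (H1 y c) a k I I).
  - move=> k x a a' _ _ _; apply: lin_eqT => //; first exact: lin_fun.
    move=> y c; rewrite addrfctE scalrfctE /= !ge.
    exact: (bilin2 (H1 y c) x k I I).
case: (lin_univ Hg) => G [GL Ge].
have Gt t : lin (G t).
  elim/T_ind: t => [|u w Hu Hw|x a]; last by rewrite Ge.
    by rewrite (lin0 GL); apply: lin_cst0.
  by rewrite (linD GL); apply: lin_add.
exists G; split; last by move=> x a y b; rewrite Ge ge.
split => k u u' v _ _ _; last exact: Gt.
by rewrite (GL k u u' I I).
Qed.

Lemma bilin_lin1 (W : lmodType K) (B : T -> T -> W) : bilin B -> lin B.
Proof.
move=> HB k u u' _ _; apply/funext => v.
by rewrite addrfctE scalrfctE /=; case: HB => H _; apply: H.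
Qed.

Lemma form_eqT (W : lmodType K) (B B' : T -> T -> W) : bilin B -> bilin B' ->
  (forall x a y b, B (tau x a) (tau y b) = B' (tau x a) (tau y b)) -> B = B'.
Proof.
move=> HB HB' H; apply: lin_eqT; try exact: bilin_lin1.
move=> x a; apply: lin_eqT; [exact: bilin2 | exact: bilin2 | exact: H].
Qed.

End Tens.


Section Fin.
Variable K : fieldType.

Definition subsp (V : lmodType K) (P : V -> Prop) :=
  P 0 /\ forall k u v, P u -> P v -> P (k *: u + v).

Lemma subspD (V : lmodType K) (P : V -> Prop) : subsp P -> forall u v, P u -> P v -> P (u + v).
Proof. by case=> _ H u v Pu Pv; have := H 1 u v Pu Pv; rewrite scale1r. Qed.
Lemma subspZ (V : lmodType K) (P : V -> Prop) : subsp P -> forall k u, P u -> P (k *: u).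
Proof. by case=> H0 H k u Pu; have := H k u 0 Pu H0; rewrite addr0. Qed.
Lemma subsp_sum (V : lmodType K) (P : V -> Prop) n (f : 'I_n -> V) :
  subsp P -> (forall i, P (f i)) -> P (\sum_(i < n) f i).
Proof. by move=> HP Hf; elim/big_ind: _ => //; [case: HP | exact: subspD]. Qed.

Lemma span_P (V : vectType K) (P : V -> Prop) (X : seq V) v : subsp P ->
  (forall x, x \in X -> P x) -> v \in <<X>>%VS -> P v.
Proof.
move=> HP PX; rewrite -[X]in_tupleE => /coord_span ->.
apply: subsp_sum => // i; apply: subspZ => //.
by apply: PX; apply: mem_nth; exact: ltn_ord.
Qed.

Lemma sub_vspace (V : vectType K) (P : V -> Prop) : subsp P ->
  exists U : {vspace V}, forall v, v \in U <-> P v.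
Proof.
move=> HP.
suff H : forall n (X : seq V), (\dim (fullv : {vspace V}) - size X = n)%N -> free X ->
  (forall x, x \in X -> P x) -> exists U : {vspace V}, forall v, v \in U <-> P v.
  by apply: (H _ [::]) => //; rewrite /free span_nil dimv0.
elim=> [|n IH] X Hn fX PX.
- exists <<X>>%VS => v; split.
    exact: span_P.
  move=> Pv; apply/negPn/negP => nv.
  have : free (v :: X) by rewrite free_cons nv fX.
  move/eqnP => /= e.
  have Hle : ((size X).+1 <= \dim (fullv : {vspace V}))%N.
    by rewrite -e; apply: dimvS; apply: subvf.
  move/eqP: Hn; rewrite subn_eq0 => Hn.
  by have := leq_trans Hle Hn; rewrite ltnn.
- case: (pselect (forall v, P v -> v \in <<X>>%VS)) => [Hall|].
    exists <<X>>%VS => v; split => [|/Hall //].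
    exact: span_P.
  move=> /existsNP [v /not_implyP [Pv nv]].
  apply: (IH (v :: X)).
  - by rewrite /= subnS Hn.
  - by rewrite free_cons fX andbT; apply/negP.
  - by move=> x; rewrite inE => /orP [/eqP ->|/PX].
Qed.

Lemma decomp (V : vectType K) (A W : lmodType K) (s : A -> W) (h : V -> A) :
  lin s -> lin h -> (forall a, exists v, s (h v) = s a) ->
  exists m (b : 'I_m -> A) (lam : 'I_m -> A -> K^o),
    [/\ forall k, lin (lam k), (forall a, s a = 0 -> forall k, lam k a = 0) &
        forall a, s a = \sum_(k < m) lam k a *: s (b k)].
Proof.
move=> Hs Hh Hsur.
have Hsh : lin (fun v => s (h v)).
  by move=> k u v _ _; rewrite (linD Hh) (linZ Hh) (linD Hs) (linZ Hs).
have [N HN] : exists N : {vspace V}, forall v, v \in N <-> s (h v) = 0.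
  apply: sub_vspace; split; first by rewrite (lin0 Hh) (lin0 Hs).
  by move=> k u v Hu Hv; rewrite (Hsh k u v I I) Hu Hv scaler0 addr0.
pose C := (N^C)%VS.
have ex a : exists c, c \in C /\ s (h c) = s a.
  case: (Hsur a) => v <-.
  have := memvf v; rewrite -(addv_complf N) => /memv_addP [v1 Hv1 [v2 Hv2 ->]].
  exists v2; split => //.
  by rewrite (linD Hh) (linD Hs) (proj1 (HN v1) Hv1) add0r.
have uniq c c' : c \in C -> c' \in C -> s (h c) = s (h c') -> c = c'.
  move=> Hc Hc' e; apply/eqP; rewrite -subr_eq0; apply/eqP.
  have H1 : c - c' \in N by apply/HN; rewrite (linB Hh) (linB Hs) e subrr.
  have : c - c' \in (N :&: C)%VS by rewrite memv_cap H1 memvB.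
  by rewrite capv_compl memv0 => /eqP.
pose sig a := proj1_sig (cid (ex a)).
have sigC a : sig a \in C by rewrite /sig; case: cid => ? [].
have sigE a : s (h (sig a)) = s a by rewrite /sig; case: cid => ? [].
have sigL : lin sig.
  move=> k a a' _ _; apply: uniq; first exact: sigC.
    by rewrite memvD ?memvZ ?sigC.
  by rewrite sigE (Hsh k _ _ I I) !sigE (Hs k a a' I I).
exists (\dim C), (fun k => h (vbasis C)`_k), (fun k a => coord (vbasis C) k (sig a)).
split.
- move=> k c a a' _ _ /=; rewrite (sigL c a a' I I).
  by rewrite linearP.
- move=> a sa k /=.
  have -> : sig a = 0.
    apply: uniq => //; first exact: mem0v.
    by rewrite sigE sa (lin0 Hh) (lin0 Hs).
  by rewrite linear0.
- move=> a; rewrite -sigE {1}(coord_vbasis (sigC a)).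
  by rewrite (lin_sum _ Hsh); apply: eq_bigr => i _; rewrite (linZ Hsh).
Qed.

Lemma decompV (V : vectType K) (A : lmodType K) (r : A -> V) : lin r ->
  exists m (b : 'I_m -> A) (lam : 'I_m -> A -> K^o),
    [/\ forall k, lin (lam k), (forall a, r a = 0 -> forall k, lam k a = 0) &
        forall a, r a = \sum_(k < m) lam k a *: r (b k)].
Proof.
move=> Hr.
have [R HR] : exists R : {vspace V}, forall w, w \in R <-> exists a, w = r a.
  apply: sub_vspace; split; first by exists 0; rewrite (lin0 Hr).
  by move=> k u v [a ->] [b ->]; exists (k *: a + b); rewrite (Hr k a b I I).
have ex (k : 'I_(\dim R)) : exists a, (vbasis R)`_k = r a.
  by apply/HR; apply: vbasis_mem; apply: mem_nth; rewrite size_tuple.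
exists (\dim R), (fun k => proj1_sig (cid (ex k))),
  (fun k a => coord (vbasis R) k (r a)); split.
- by move=> k c a a' _ _ /=; rewrite (Hr c a a' I I) linearP.
- by move=> a ra k /=; rewrite ra linear0.
- move=> a; rewrite {1}(@coord_vbasis _ _ (r a) R); last by apply/HR; exists a.
  by apply: eq_bigr => k _; case: cid => /= b <-.
Qed.

End Fin.


Section LieL.
Variable K : fieldType.
Hypothesis hK2 : (2 \notin [pchar K])%N.
Variables (L : lmodType K) (brL : L -> L -> L).
Hypotheses (hL : is_lie brL) (hLp : perfect brL).

Lemma two_nz : (2%:R : K) != 0.
Proof. by move: hK2; rewrite inE /=; apply: contra => ->. Qed.

Lemma half0 (x : K) : x + x = 0 -> x = 0.
Proof.
move=> e; have : 2%:R * x = 0 by rewrite mulr2n mulrDl mul1r.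
by move/eqP; rewrite mulf_eq0 (negbTE two_nz) /= => /eqP.
Qed.

Lemma brL_bil : bilin brL. Proof. by case: hL. Qed.
Let bl1 := bilin1 brL_bil.
Let bl2 := bilin2 brL_bil.

Lemma brL_skew x y : brL x y = - brL y x.
Proof.
case: hL => _ H0 _.
have := H0 (x + y).
rewrite (linD (bl1 _)) (linD (bl2 x)) (linD (bl2 y)) !H0 add0r addr0 => /eqP.
by rewrite addr_eq0 => /eqP.
Qed.

Lemma jac x y z : brL x (brL y z) + brL y (brL z x) + brL z (brL x y) = 0.
Proof. by case: hL. Qed.

Lemma jac2 x y z : brL (brL x y) z + brL (brL y z) x + brL (brL z x) y = 0.
Proof.
rewrite (brL_skew (brL x y) z) (brL_skew (brL y z) x) (brL_skew (brL z x) y).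
by rewrite -!opprD addrC addrA jac oppr0.
Qed.

Lemma perf0 (W : lmodType K) (g : L -> W) : lin g -> (forall x y, g (brL x y) = 0) ->
  forall x, g x = 0.
Proof.
move=> Hg H x; case: (hLp x) => n [u [v ->]].
by rewrite (lin_sum _ Hg) big1.
Qed.

Lemma Cform0 (psi : L -> L -> K^o) : Cform brL psi -> psi = (fun _ _ => 0).
Proof.
move=> [Hb Hs Hc].
have N1 u v : psi (- u) v = - psi u v by apply: (linN (bilin1 Hb v)).
have N2 u v : psi u (- v) = - psi u v by apply: (linN (bilin2 Hb u)).
have D1 u u' v : psi (u + u') v = psi u v + psi u' v by apply: (linD (bilin1 Hb v)).
pose Q a b c d := psi (brL a b) (brL c d).
have Qe a b c d : Q a b c d = psi (brL (brL c d) a) b by rewrite /Q Hc.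
have jac' a c d : brL (brL c d) a = - brL (brL d a) c - brL (brL a c) d.
  rewrite (brL_skew (brL c d) a) (brL_skew (brL d a) c) (brL_skew (brL a c) d) !opprK.
  apply/eqP; rewrite eq_sym -addr_eq0 addrC addrA; apply/eqP; exact: jac.
have B a b c d : Q a b c d = - Q c b d a - Q d b a c.
  by rewrite Qe jac' D1 !N1 -!Qe.
have key a b c d : Q a b c d = 0.
  have B1 := B a b c d.
  have B2 := B b a c d.
  have sk1 x y w : psi (brL x y) w = - psi (brL y x) w by rewrite (brL_skew x y) N1.
  have sk2 x y w : psi w (brL x y) = - psi w (brL y x) by rewrite (brL_skew x y) N2.
  have e1 : Q c b d a = - Q a d b c.
    by rewrite /Q (sk1 c b) (sk2 d a) opprK (Hs (brL b c)).
  have e2 : Q d b a c = Q a c b d.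
    by rewrite /Q (sk1 d b) (Hs (brL b d)) opprK.
  have e3 : Q b a c d = - Q a b c d by rewrite /Q (sk1 b a).
  have e4 : Q c a d b = Q a c b d by rewrite /Q (sk1 c a) (sk2 d b) opprK.
  have e5 : Q d a b c = - Q a d b c by rewrite /Q (sk1 d a).
  rewrite e1 e2 in B1; rewrite e3 e4 e5 in B2.
  apply: half0; move: B1 B2.
  move: (Q a b c d) (Q a d b c) (Q a c b d) => q1 q3 q2.
  move/eqP; rewrite -subr_eq0 => /eqP f1; move/eqP; rewrite -subr_eq0 => /eqP f2.
  have -> : q1 + q1 = (q1 - (- - q3 - q2)) - (- q1 - (- q2 - - q3)) by ring.
  by rewrite f1 f2 subrr.
have H1 a b w : psi (brL a b) w = 0.
  move: w; apply: (perf0 (g := psi (brL a b))); first exact: (bilin2 Hb).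
  by move=> c d; apply: key.
apply/funext => u; apply/funext => w /=.
move: u; apply: (perf0 (g := fun u => psi u w)); first exact: (bilin1 Hb).
by move=> a b; apply: H1.
Qed.

End LieL.


Section Prod.
Variable K : fieldType.
Variables (L A T D : lmodType K) (tau : L -> A -> T).
Hypothesis htau : is_tensor (fun _ => True) (fun _ => True) tau.

Definition gen (X : (T * D)%type) := (exists x a, X = (tau x a, 0)) \/ (exists d, X = (0, d)).

Lemma TD_ind (P : (T * D)%type -> Prop) : P 0 -> (forall u v, P u -> P v -> P (u + v)) ->
  (forall X, gen X -> P X) -> forall X, P X.
Proof.
move=> P0 PD Pg [t d].
have -> : (t, d) = (t, 0) + (0, d).
  have -> : (t, 0) + (0, d) = (t + 0, 0 + d) :> (T * D)%type by [].
  by rewrite addr0 add0r.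
apply: (PD); last by apply: (Pg); right; exists d.
elim/(T_ind htau): t => [|u v Hu Hv|x a]; first exact: P0.
  have -> : (u + v, 0 : D) = (u, 0) + (v, 0).
    have -> : (u, 0) + (v, 0) = (u + v, 0 + 0 : D) :> (T * D)%type by [].
    by rewrite addr0.
  exact: PD.
by apply: Pg; left; exists x, a.
Qed.

Lemma bilin_D1 (W : lmodType K) (B : (T * D)%type -> (T * D)%type -> W) : bilin B ->
  forall u v w, B (u + v) w = B u w + B v w.
Proof. by move=> HB u v w; apply: (linD (bilin1 HB w)). Qed.
Lemma bilin_D2 (W : lmodType K) (B : (T * D)%type -> (T * D)%type -> W) : bilin B ->
  forall u v w, B w (u + v) = B w u + B w v.
Proof. by move=> HB u v w; apply: (linD (bilin2 HB w)). Qed.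
Lemma bilin_01 (W : lmodType K) (B : (T * D)%type -> (T * D)%type -> W) : bilin B ->
  forall w, B 0 w = 0.
Proof. by move=> HB w; apply: (lin0 (bilin1 HB w)). Qed.
Lemma bilin_02 (W : lmodType K) (B : (T * D)%type -> (T * D)%type -> W) : bilin B ->
  forall w, B w 0 = 0.
Proof. by move=> HB w; apply: (lin0 (bilin2 HB w)). Qed.

Lemma form_eqTD (W : lmodType K) (B B' : (T * D)%type -> (T * D)%type -> W) :
  bilin B -> bilin B' -> (forall X Y, gen X -> gen Y -> B X Y = B' X Y) -> B = B'.
Proof.
move=> HB HB' H; apply/funext => X; apply/funext => Y; move: X Y.
elim/TD_ind => [|u v Hu Hv|X gX] Y.
- by rewrite !bilin_01.
- by rewrite !bilin_D1 // Hu Hv.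
elim/TD_ind: Y => [|u v Hu Hv|Y gY].
- by rewrite !bilin_02.
- by rewrite !bilin_D2 // Hu Hv.
exact: H.
Qed.

Variable (br : (T * D)%type -> (T * D)%type -> (T * D)%type).
Hypothesis hbr : bilin br.

Definition cycE (Psi : (T * D)%type -> (T * D)%type -> K^o) X Y Z :=
  Psi (br X Y) Z + Psi (br Z X) Y + Psi (br Y Z) X.

Lemma cycE_rot Psi X Y Z : cycE Psi X Y Z = cycE Psi Y Z X.
Proof. by rewrite /cycE addrC addrA. Qed.

Lemma cycE_D Psi : bilin Psi -> forall X1 X2 Y Z,
  cycE Psi (X1 + X2) Y Z = cycE Psi X1 Y Z + cycE Psi X2 Y Z.
Proof.
move=> HP X1 X2 Y Z; rewrite /cycE.
rewrite !(bilin_D1 hbr) !(bilin_D2 hbr) !(bilin_D1 HP) !(bilin_D2 HP).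
ring.
Qed.

Lemma cycE_0 Psi : bilin Psi -> forall Y Z, cycE Psi 0 Y Z = 0.
Proof.
move=> HP Y Z; have := cycE_D HP 0 0 Y Z; rewrite addr0 => e.
by apply: (addrI (cycE Psi 0 Y Z)); rewrite addr0 -e.
Qed.

Lemma cycE_D2 Psi : bilin Psi -> forall X Y1 Y2 Z,
  cycE Psi X (Y1 + Y2) Z = cycE Psi X Y1 Z + cycE Psi X Y2 Z.
Proof.
move=> HP X Y1 Y2 Z.
have r := cycE_rot Psi.
by rewrite (r X (Y1 + Y2) Z) cycE_D // -(r X Y1 Z) -(r X Y2 Z).
Qed.

Lemma cycE_D3 Psi : bilin Psi -> forall X Y Z1 Z2,
  cycE Psi X Y (Z1 + Z2) = cycE Psi X Y Z1 + cycE Psi X Y Z2.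
Proof.
move=> HP X Y Z1 Z2.
have r := cycE_rot Psi.
by rewrite (r X Y) (r Y) cycE_D // -(r Y Z1 X) -(r X Y Z1) -(r Y Z2 X) -(r X Y Z2).
Qed.

Lemma cycE_02 Psi : bilin Psi -> forall X Z, cycE Psi X 0 Z = 0.
Proof. by move=> HP X Z; rewrite cycE_rot cycE_0. Qed.
Lemma cycE_03 Psi : bilin Psi -> forall X Y, cycE Psi X Y 0 = 0.
Proof. by move=> HP X Y; rewrite (cycE_rot Psi X) (cycE_rot Psi Y) cycE_0. Qed.

Lemma cyc_gen Psi : bilin Psi ->
  (forall X Y Z, gen X -> gen Y -> gen Z -> cycE Psi X Y Z = 0) ->
  forall X Y Z, cycE Psi X Y Z = 0.
Proof.
move=> HP H X Y Z.
elim/TD_ind: X Y Z => [|u v Hu Hv|X gX] Y Z.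
- exact: cycE_0.
- by rewrite cycE_D // Hu Hv addr0.
elim/TD_ind: Y Z => [|u v Hu Hv|Y gY] Z.
- exact: cycE_02.
- by rewrite cycE_D2 // Hu Hv addr0.
elim/TD_ind: Z => [|u v Hu Hv|Z gZ].
- exact: cycE_03.
- by rewrite cycE_D3 // Hu Hv addr0.
exact: H.
Qed.

End Prod.


Section TensGen.
Variable K : fieldType.
Variables (U V T : lmodType K) (S1 : U -> Prop) (S2 : V -> Prop) (tau : U -> V -> T).
Hypothesis htau : is_tensor S1 S2 tau.
Hypotheses (hS1 : subsp S1) (hS2 : subsp S2).

Lemma tens_ind (P : T -> Prop) : P 0 -> (forall u v, P u -> P v -> P (u + v)) ->
  (forall u v, S1 u -> S2 v -> P (tau u v)) -> forall t, P t.
Proof.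
move=> P0 PD Pg t; case: htau => _ /(_ t) [n [u [v [Huv ->]]]] _.
by elim/big_ind: _ => // i _; case: (Huv i) => ? ?; apply: Pg.
Qed.

Lemma tens01 v : S2 v -> tau 0 v = 0.
Proof.
move=> Hv; case: htau => [[H1 _] _ _].
have := H1 1 0 0 v (proj1 hS1) (proj1 hS1) Hv; rewrite !scale1r addr0 => e.
by apply: (addrI (tau 0 v)); rewrite addr0 -e.
Qed.

Lemma tens02 u : S1 u -> tau u 0 = 0.
Proof.
move=> Hu; case: htau => [[_ H2] _ _].
have := H2 1 u 0 0 Hu (proj1 hS2) (proj1 hS2); rewrite !scale1r addr0 => e.
by apply: (addrI (tau u 0)); rewrite addr0 -e.
Qed.

Lemma tens_sum1 n (c : 'I_n -> K) (u : 'I_n -> U) v : (forall i, S1 (u i)) -> S2 v ->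
  tau (\sum_(i < n) c i *: u i) v = \sum_(i < n) c i *: tau (u i) v.
Proof.
move=> Hu Hv; case: htau => [[H1 _] _ _].
pose P y1 y2 := S1 y1 /\ tau y1 v = y2.
suff : P (\sum_(i < n) c i *: u i) (\sum_(i < n) c i *: tau (u i) v) by case.
apply: big_rec2; first by split; [case: hS1 | exact: tens01].
move=> i y1 y2 _ [Py1 <-]; split; first by case: hS1 => _ /(_ (c i) _ _ (Hu i) Py1).
exact: H1.
Qed.

Lemma tens_sum2 n (c : 'I_n -> K) u (v : 'I_n -> V) : S1 u -> (forall i, S2 (v i)) ->
  tau u (\sum_(i < n) c i *: v i) = \sum_(i < n) c i *: tau u (v i).
Proof.
move=> Hu Hv; case: htau => [[_ H2] _ _].
pose P y1 y2 := S2 y1 /\ tau u y1 = y2.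
suff : P (\sum_(i < n) c i *: v i) (\sum_(i < n) c i *: tau u (v i)) by case.
apply: big_rec2; first by split; [case: hS2 | exact: tens02].
move=> i y1 y2 _ [Py1 <-]; split; first by case: hS2 => _ /(_ (c i) _ _ (Hv i) Py1).
exact: H2.
Qed.

End TensGen.


Section Aux.
Variable K : fieldType.
Lemma scaleK (k x : K) : k *: (x : K^o) = k * x. Proof. by []. Qed.
Lemma fapp2 (U V W : lmodType K) (f g : U -> V -> W) k u v :
  (k *: f + g) u v = k *: f u v + g u v.
Proof. by []. Qed.
Lemma fapp2D (U V W : lmodType K) (f g : U -> V -> W) u v :
  (f + g) u v = f u v + g u v.
Proof. by []. Qed.
Lemma fapp1 (U W : lmodType K) (f g : U -> W) k u : (k *: f + g) u = k *: f u + g u.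
Proof. by []. Qed.

Lemma bilin_comb (U V W : lmodType K) (f g : U -> V -> W) k :
  bilin f -> bilin g -> bilin (k *: f + g).
Proof.
move=> [F1 F2] [G1 G2]; split => c u u' v _ _ _; rewrite !fapp2.
  rewrite (F1 c u u' v I I I) (G1 c u u' v I I I).
  by rewrite !scalerDr !scalerA [c * k]mulrC addrACA.
rewrite (F2 c u u' v I I I) (G2 c u u' v I I I).
by rewrite !scalerDr !scalerA [c * k]mulrC addrACA.
Qed.

Lemma bilin_add (U V W : lmodType K) (f g : U -> V -> W) :
  bilin f -> bilin g -> bilin (f + g).
Proof. by move=> Hf Hg; rewrite -[f]scale1r; apply: bilin_comb. Qed.

Lemma bilin_zero (U V W : lmodType K) : bilin (fun (_ : U) (_ : V) => (0 : W)).
Proof. by split => *; rewrite scaler0 addr0. Qed.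

Lemma bilin_tr (U W : lmodType K) (f : U -> U -> W) : bilin f -> bilin (fun x y => f y x).
Proof. by move=> [F1 F2]; split => k u u' v _ _ _; [apply: F2 | apply: F1]. Qed.
End Aux.

Section Main.
Variable K : fieldType.
Hypothesis hK2 : (2 \notin [pchar K])%N.
Variables (L : lmodType K) (brL : L -> L -> L).
Hypotheses (hL : is_lie brL) (hLp : perfect brL).
Variable A : comAlgType K.
Variables (D : lmodType K) (brD : D -> D -> D) (rho : D -> A -> A).
Hypothesis hD : der_subalg brD rho.
Variables (T : lmodType K) (tau : L -> A -> T).
Hypothesis htau : is_tensor (fun _ => True) (fun _ => True) tau.
Variable br : (T * D)%type -> (T * D)%type -> (T * D)%type.
Hypothesis hbr : semidirect_bracket brL brD rho tau br.
Variables (T1 : lmodType K) (tau1 : (L -> L -> K^o) -> (A -> K^o) -> T1).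
Hypothesis htau1 : is_tensor (Z2comm brL) (Xset rho) tau1.
Variables (T2 : lmodType K).

Let tauB := tau_bilin htau.
Lemma tau0l a : tau 0 a = 0. Proof. exact: (lin0 (bilin1 tauB a)). Qed.
Lemma tau0r x : tau x 0 = 0. Proof. exact: (lin0 (bilin2 tauB x)). Qed.

Lemma br_bil : bilin br. Proof. by case: hbr. Qed.
Lemma brTT x y a b : br (tau x a, 0) (tau y b, 0) = (tau (brL x y) (a * b), 0).
Proof. by case: hbr. Qed.
Lemma brDT d x a : br (0, d) (tau x a, 0) = (tau x (rho d a), 0).
Proof. by case: hbr. Qed.
Lemma brTD d x a : br (tau x a, 0) (0, d) = (- tau x (rho d a), 0).
Proof. by case: hbr. Qed.
Lemma brDD d e : br (0, d) (0, e) = (0, brD d e).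
Proof. by case: hbr. Qed.

Lemma rho_lin d : lin (rho d). Proof. by case: hD => _ _ /(_ d) []. Qed.
Lemma rho_leib d a b : rho d (a * b) = rho d a * b + a * rho d b.
Proof. by case: hD => _ _ /(_ d) []. Qed.
Lemma rho1 d : rho d 1 = 0.
Proof.
have := rho_leib d 1 1; rewrite !mul1r mulr1 => e.
by apply: (addrI (rho d 1)); rewrite addr0 -e.
Qed.

Lemma Z2_sub : subsp (Z2comm brL).
Proof.
split.
  split; [exact: bilin_zero | by [] | by move=> *; rewrite !addr0].
move=> k u v [Hu1 Hu2 Hu3] [Hv1 Hv2 Hv3]; split.
- exact: bilin_comb.
- by move=> x y; rewrite !fapp2 Hu2 Hv2.
- move=> x y z; rewrite !fapp2 !scaleK.
  transitivity (k * (u (brL x y) z + u (brL z x) y + u (brL y z) x) +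
    (v (brL x y) z + v (brL z x) y + v (brL y z) x)); first by ring.
  by rewrite Hu3 Hv3 mulr0 addr0.
Qed.

Lemma X_sub : subsp (Xset rho).
Proof.
split.
  by split; [exact: lin_cst0 | by []].
move=> k u v [Hu1 Hu2] [Hv1 Hv2]; split; first exact: lin_fun.
by move=> a b d; rewrite fapp1 Hu2 Hv2 scaler0 addr0.
Qed.

Definition Bf (phi0 : L -> L -> K^o) (chi : A -> K^o) : T -> T -> K^o :=
  if pselect (exists B : T -> T -> K^o, bilin B /\
     forall x a y b, B (tau x a) (tau y b) = phi0 x y * chi (a * b))
  is left e then proj1_sig (cid e) else (fun _ _ => 0).

Lemma Bf_spec phi0 chi : bilin phi0 -> lin chi ->
  bilin (Bf phi0 chi) /\
  forall x a y b, Bf phi0 chi (tau x a) (tau y b) = phi0 x y * chi (a * b).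
Proof.
move=> [P1 P2] Hc.
have ex : exists B : T -> T -> K^o, bilin B /\
     forall x a y b, B (tau x a) (tau y b) = phi0 x y * chi (a * b).
  apply: (mk_form htau) => [y b|x a]; split => k u u' v _ _ _ /=.
  - by rewrite (P1 k u u' y I I I) !scaleK; ring.
  - by rewrite mulrDl -scalerAl (Hc k _ _ I I) !scaleK; ring.
  - by rewrite (P2 k x u u' I I I) !scaleK; ring.
  - by rewrite mulrDr -scalerAr (Hc k _ _ I I) !scaleK; ring.
rewrite /Bf; case: pselect => [e|/(_ ex)//].
by case: cid.
Qed.

Lemma Bf_bilin : bilin_on (Z2comm brL) (Xset rho) Bf.
Proof.
split.
- move=> k u u' v Hu Hu' Hv.
  have Hc : Z2comm brL (k *: u + u') by case: Z2_sub => _; apply.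
  have [Hu1 _ _] := Hu; have [Hu1' _ _] := Hu'; have [Hc1 _ _] := Hc; have [Hv1 _] := Hv.
  apply: (form_eqT htau).
  + exact: (Bf_spec Hc1 Hv1).1.
  + by apply: bilin_comb; [exact: (Bf_spec Hu1 Hv1).1 | exact: (Bf_spec Hu1' Hv1).1].
  + move=> x a y b; rewrite fapp2 (Bf_spec Hc1 Hv1).2 (Bf_spec Hu1 Hv1).2.
    by rewrite (Bf_spec Hu1' Hv1).2 fapp2 !scaleK; ring.
- move=> k u v v' Hu Hv Hv'.
  have Hc : Xset rho (k *: v + v') by case: X_sub => _; apply.
  have [Hu1 _ _] := Hu; have [Hv1 _] := Hv; have [Hv1' _] := Hv'; have [Hc1 _] := Hc.
  apply: (form_eqT htau).
  + exact: (Bf_spec Hu1 Hc1).1.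
  + by apply: bilin_comb; [exact: (Bf_spec Hu1 Hv1).1 | exact: (Bf_spec Hu1 Hv1').1].
  + move=> x a y b; rewrite fapp2 (Bf_spec Hu1 Hc1).2 (Bf_spec Hu1 Hv1).2.
    by rewrite (Bf_spec Hu1 Hv1').2 fapp1 !scaleK; ring.
Qed.

Lemma f1_ex : exists f : T1 -> T -> T -> K^o, lin f /\
  forall u v, Z2comm brL u -> Xset rho v -> f (tau1 u v) = Bf u v.
Proof. by case: htau1 => _ _ /(_ _ Bf Bf_bilin). Qed.

Definition f1 := proj1_sig (cid f1_ex).
Lemma f1_lin : lin f1. Proof. exact: (proj1 (proj2_sig (cid f1_ex))). Qed.
Lemma f1_tau u v : Z2comm brL u -> Xset rho v -> f1 (tau1 u v) = Bf u v.
Proof. exact: (proj2 (proj2_sig (cid f1_ex))). Qed.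


Definition good (B : T -> T -> K^o) := [/\ bilin B, (forall u v, B u v = B v u),
  (forall x y z a b c, B (tau (brL x y) (a * b)) (tau z c) + B (tau (brL z x) (c * a)) (tau y b)
     + B (tau (brL y z) (b * c)) (tau x a) = 0) &
  (forall d x y a b, B (tau x (rho d a)) (tau y b) = B (tau x a) (tau y (rho d b)))].

Lemma good0 : good (fun _ _ => 0).
Proof. by split => //; [exact: bilin_zero | move=> *; rewrite !addr0]. Qed.

Lemma good_add B B' : good B -> good B' -> good (B + B').
Proof.
move=> [H1 H2 H3 H4] [H1' H2' H3' H4']; split.
- exact: bilin_add.
- by move=> u v; rewrite !fapp2D H2 H2'.
- move=> x y z a b c; rewrite !fapp2D.
  transitivity ((B (tau (brL x y) (a * b)) (tau z c) + B (tau (brL z x) (c * a)) (tau y b)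
     + B (tau (brL y z) (b * c)) (tau x a)) + (B' (tau (brL x y) (a * b)) (tau z c) + B' (tau (brL z x) (c * a)) (tau y b)
     + B' (tau (brL y z) (b * c)) (tau x a))); first by ring.
  by rewrite H3 H3' addr0.
- by move=> d x y a b; rewrite !fapp2D H4 H4'.
Qed.

Lemma good_Bf u v : Z2comm brL u -> Xset rho v -> good (Bf u v).
Proof.
move=> [Hu1 Hu2 Hu3] [Hv1 Hv2].
have [HB HBv] := Bf_spec Hu1 Hv1.
split => //.
- have E : Bf u v = (fun a b => Bf u v b a).
    apply: (form_eqT htau) => //; first exact: bilin_tr.
    by move=> x a y b /=; rewrite !HBv Hu2 (mulrC b a).
  by move=> t t'; rewrite {1}E.
- move=> x y z a b c; rewrite !HBv.
  have -> : c * a * b = a * b * c by ring.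
  have -> : b * c * a = a * b * c by ring.
  by rewrite -!mulrDl Hu3 mul0r.
- move=> d x y a b; rewrite !HBv.
  have := Hv2 a b d; rewrite (linB Hv1) => /eqP; rewrite subr_eq0 => /eqP ->.
  by [].
Qed.

Lemma f1_good t : good (f1 t).
Proof.
elim/(tens_ind htau1): t => [|u v Hu Hv|u v Hu Hv].
- by rewrite (lin0 f1_lin); exact: good0.
- by rewrite (linD f1_lin); apply: good_add.
- by rewrite f1_tau //; apply: good_Bf.
Qed.

Definition Phi (p : (T1 * T2 * (D -> D -> K^o))%type) : (T * D)%type -> (T * D)%type -> K^o :=
  fun X Y => f1 p.1.1 X.1 Y.1 + p.2 X.2 Y.2.

Lemma fst_comb k (X X' : (T * D)%type) : (k *: X + X').1 = k *: X.1 + X'.1.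
Proof. by []. Qed.
Lemma snd_comb k (X X' : (T * D)%type) : (k *: X + X').2 = k *: X.2 + X'.2.
Proof. by []. Qed.

Section PhiZ2.
Variable p : (T1 * T2 * (D -> D -> K^o))%type.
Hypothesis hp : Z2comm brD p.2.
Local Notation B := (f1 p.1.1).
Local Notation q := p.2.
Lemma B_bil : bilin B. Proof. by case: (f1_good p.1.1). Qed.
Lemma q_bil : bilin q. Proof. by case: hp. Qed.
Lemma B0l v : B 0 v = 0. Proof. exact: (lin0 (bilin1 B_bil v)). Qed.
Lemma B0r v : B v 0 = 0. Proof. exact: (lin0 (bilin2 B_bil v)). Qed.
Lemma BNl u v : B (- u) v = - B u v. Proof. exact: (linN (bilin1 B_bil v)). Qed.
Lemma q0l v : q 0 v = 0. Proof. exact: (lin0 (bilin1 q_bil v)). Qed.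
Lemma q0r v : q v 0 = 0. Proof. exact: (lin0 (bilin2 q_bil v)). Qed.

Lemma Phi_bil : bilin (Phi p).
Proof.
have [B1 B2] := B_bil; have [q1 q2] := q_bil.
split => k X X' Y _ _ _; rewrite /Phi ?fst_comb ?snd_comb.
  rewrite (B1 k _ _ _ I I I) (q1 k _ _ _ I I I) !scaleK; ring.
rewrite (B2 k _ _ _ I I I) (q2 k _ _ _ I I I) !scaleK; ring.
Qed.

Lemma Phi_sym X Y : Phi p X Y = Phi p Y X.
Proof.
case: (f1_good p.1.1) => _ Hs _ _; case: hp => _ hs _.
by rewrite /Phi Hs hs.
Qed.

Lemma cTTT x y z a b c : cycE br (Phi p) (tau x a, 0) (tau y b, 0) (tau z c, 0) = 0.
Proof.
rewrite /cycE !brTT /Phi /= !q0l.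
case: (f1_good p.1.1) => _ _ H3 _.
by rewrite !addr0; apply: H3.
Qed.

Lemma cTTD x y a b d : cycE br (Phi p) (tau x a, 0) (tau y b, 0) (0, d) = 0.
Proof.
rewrite /cycE brTT brDT brTD /Phi /= !q0l B0r !addr0 add0r BNl.
case: (f1_good p.1.1) => _ Hs _ H4.
by rewrite (Hs (tau y _)) H4 subrr.
Qed.

Lemma cTDD x a d e : cycE br (Phi p) (tau x a, 0) (0, d) (0, e) = 0.
Proof. by rewrite /cycE brTD brDT brDD /Phi /= !q0l q0r !B0r B0l !addr0. Qed.

Lemma cDDD d e f : cycE br (Phi p) (0, d) (0, e) (0, f) = 0.
Proof.
rewrite /cycE !brDD /Phi /= !B0l !add0r.
by case: hp => _ _; apply.
Qed.

Lemma Phi_cyc X Y Z : cycE br (Phi p) X Y Z = 0.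
Proof.
apply: (cyc_gen htau br_bil Phi_bil) => {X Y Z} X Y Z.
have r := cycE_rot br (Phi p).
move=> [[x [a ->]]|[d ->]] [[y [b ->]]|[e ->]] [[z [c ->]]|[f ->]].
- exact: cTTT.
- exact: cTTD.
- by rewrite -r cTTD.
- exact: cTDD.
- by rewrite r cTTD.
- by rewrite r cTDD.
- by rewrite -r cTDD.
- exact: cDDD.
Qed.

Lemma Phi_Z2 : Z2comm br (Phi p).
Proof. split; [exact: Phi_bil | exact: Phi_sym | exact: Phi_cyc]. Qed.

End PhiZ2.


Section Surj.
Variable psi : (T * D)%type -> (T * D)%type -> K^o.
Hypothesis hpsi : Z2comm br psi.

Lemma psi_bil : bilin psi. Proof. by case: hpsi. Qed.
Lemma psi_sym X Y : psi X Y = psi Y X. Proof. by case: hpsi. Qed.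
Lemma psi_cyc X Y Z : psi (br X Y) Z + psi (br Z X) Y + psi (br Y Z) X = 0.
Proof. by case: hpsi. Qed.
Lemma psi0l Y : psi 0 Y = 0. Proof. exact: (lin0 (bilin1 psi_bil Y)). Qed.
Lemma psiNl X Y : psi (- X) Y = - psi X Y. Proof. exact: (linN (bilin1 psi_bil Y)). Qed.

Definition F a b x y := psi (tau x a, 0) (tau y b, 0).
Definition M x a d := psi (tau x a, 0) (0, d).

Lemma pairT_comb k t t' : ((k *: t + t', 0) : (T * D)%type) = k *: (t, 0) + (t', 0).
Proof.
have -> : k *: (t, 0) + (t', 0) = (k *: t + t', k *: 0 + 0) :> (T * D)%type by [].
by rewrite scaler0 addr0.
Qed.
Lemma pairD_comb k d d' : ((0, k *: d + d') : (T * D)%type) = k *: (0, d) + (0, d').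
Proof.
have -> : k *: (0, d) + (0, d') = (k *: 0 + 0, k *: d + d') :> (T * D)%type by [].
by rewrite scaler0 addr0.
Qed.

Lemma tauL k x x' a : tau (k *: x + x') a = k *: tau x a + tau x' a.
Proof. by case: tauB => H _; apply: H. Qed.
Lemma tauA k x a a' : tau x (k *: a + a') = k *: tau x a + tau x a'.
Proof. by case: tauB => _ H; apply: H. Qed.

Lemma psiL1 k X X' Y : psi (k *: X + X') Y = k *: psi X Y + psi X' Y.
Proof. by case: psi_bil => H _; apply: H. Qed.
Lemma psiL2 k X Y Y' : psi X (k *: Y + Y') = k *: psi X Y + psi X Y'.
Proof. by case: psi_bil => _ H; apply: H. Qed.

Lemma F_lx a b y : lin (fun x => F a b x y).
Proof. by move=> k x x' _ _; rewrite /F tauL pairT_comb psiL1. Qed.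
Lemma F_ly a b x : lin (fun y => F a b x y).
Proof. by move=> k y y' _ _; rewrite /F tauL pairT_comb psiL2. Qed.
Lemma F_la b x y : lin (fun a => F a b x y).
Proof. by move=> k a a' _ _; rewrite /F tauA pairT_comb psiL1. Qed.
Lemma M_lx a d : lin (fun x => M x a d).
Proof. by move=> k x x' _ _; rewrite /M tauL pairT_comb psiL1. Qed.

Lemma F_lxE a b y k x x' : F a b (k *: x + x') y = k *: F a b x y + F a b x' y.
Proof. by rewrite /F tauL pairT_comb psiL1. Qed.
Lemma F_lyE a b x k y y' : F a b x (k *: y + y') = k *: F a b x y + F a b x y'.
Proof. by rewrite /F tauL pairT_comb psiL2. Qed.
Lemma F_laE b x y k a a' : F (k *: a + a') b x y = k *: F a b x y + F a' b x y.
Proof. by rewrite /F tauA pairT_comb psiL1. Qed.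

Lemma F_sym a b x y : F a b x y = F b a y x.
Proof. by rewrite /F psi_sym. Qed.

Lemma F0a b x y : F 0 b x y = 0.
Proof. by rewrite /F tau0r; have -> : ((0, 0) : (T * D)%type) = 0 by []; rewrite psi0l. Qed.

Lemma FC a b c x y z :
  F (a * b) c (brL x y) z + F (c * a) b (brL z x) y + F (b * c) a (brL y z) x = 0.
Proof. by rewrite /F -!brTT; apply: psi_cyc. Qed.

Lemma FM a b d x y :
  M (brL x y) (a * b) d + F (rho d a) b x y - F (rho d b) a y x = 0.
Proof.
have := psi_cyc (tau x a, 0) (tau y b, 0) (0, d).
rewrite brTT brDT brTD.
have -> : ((- tau y (rho d b), 0) : (T * D)%type) = - (tau y (rho d b), 0).
  by have -> : - ((tau y (rho d b), 0) : (T * D)%type) = (- tau y (rho d b), - 0) by []; rewrite oppr0.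
by rewrite psiNl.
Qed.

Lemma M0 x c d : M x c d = 0.
Proof.
pose lam w := M w c d.
have Hl : lin lam by exact: M_lx.
have E1 x' y' : F (rho d c) 1 x' y' = - lam (brL x' y').
  have := FM c 1 d x' y'; rewrite mulr1 rho1 F0a subr0 => /eqP.
  by rewrite addrC addr_eq0 => /eqP ->.
have E2 x' y' : F (rho d c) 1 y' x' = lam (brL x' y').
  have := FM 1 c d x' y'; rewrite mul1r rho1 F0a addr0 => /eqP.
  by rewrite subr_eq0 => /eqP <-.
have key x' y' z' : lam (brL (brL x' y') z') = 0.
  have := FC 1 1 (rho d c) x' y' z'.
  rewrite !mul1r mulr1 F_sym E2 !E1.
  have J := jac2 hL x' y' z'.
  have : lam (brL (brL x' y') z' + brL (brL y' z') x' + brL (brL z' x') y') = 0.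
    by rewrite J (lin0 Hl).
  rewrite !(linD Hl) => e1 e2.
  apply: (half0 hK2).
  transitivity ((lam (brL (brL x' y') z') + lam (brL (brL y' z') x') + lam (brL (brL z' x') y'))
    + (lam (brL (brL x' y') z') + - lam (brL (brL z' x') y') + - lam (brL (brL y' z') x'))).
    by ring.
  by rewrite e1 e2 addr0.
have key2 w z' : lam (brL w z') = 0.
  move: w; apply: (perf0 hLp (g := fun w => lam (brL w z'))).
    move=> k u v _ _ /=; rewrite (bilin1 (brL_bil hL) z' k I I).
    exact: (Hl k _ _ I I).
  by move=> *; apply: key.
by move: x; apply: (perf0 hLp Hl) => *; apply: key2.
Qed.


Lemma Fsym2 u v p q : F u v p q = F u v q p.
Proof.
pose Kf (p q : L) : K^o := F u v p q - F u v q p.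
have rel x y z : Kf (brL x y) z = Kf (brL y z) x.
  have e1 := FC u 1 v x y z; have e2 := FC v 1 u x y z.
  rewrite !mulr1 !mul1r (mulrC v u) (F_sym v u (brL x y)) (F_sym v u (brL y z)) in e1 e2.
  rewrite /Kf; apply/eqP; rewrite -subr_eq0; apply/eqP.
  transitivity ((F u v (brL x y) z + F (u * v) 1 (brL z x) y + F u v x (brL y z)) -
     (F u v z (brL x y) + F (u * v) 1 (brL z x) y + F u v (brL y z) x)); first by ring.
  by rewrite e1 e2 subrr.
have HC : Cform brL Kf.
  split.
  - split => k a a' b _ _ _; rewrite /Kf.
      by rewrite (F_lxE u v b k a a') (F_lyE u v b k a a') !scaleK; ring.
    by rewrite (F_lyE u v a k a' b) (F_lxE u v a k a' b) !scaleK; ring.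
  - by move=> a b; rewrite /Kf opprB.
  - by move=> x y z; rewrite (rel z x y).
have := Cform0 hK2 hL hLp HC => /(congr1 (fun f => f p q)) /= /eqP.
by rewrite subr_eq0 => /eqP.
Qed.

Lemma Fprod u v p q : F u v p q = F (u * v) 1 p q.
Proof.
pose Dl (p q : L) : K^o := F u v p q - F (u * v) 1 p q.
have R3 x y z : Dl (brL x y) z + Dl (brL y z) x = 0.
  have e1 := FC u 1 v x y z; have e2 := FC (u * v) 1 1 x y z.
  rewrite !mulr1 !mul1r (mulrC v u) (F_sym v u (brL y z)) (Fsym2 u v x) in e1.
  rewrite !mulr1 !mul1r (F_sym 1 (u * v) (brL y z)) (Fsym2 (u * v) 1 x) in e2.
  rewrite /Dl.
  transitivity ((F u v (brL x y) z + F (u * v) 1 (brL z x) y + F u v (brL y z) x) -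
    (F (u * v) 1 (brL x y) z + F (u * v) 1 (brL z x) y + F (u * v) 1 (brL y z) x)); first by ring.
  by rewrite e1 e2 subrr.
have key x y z : Dl (brL x y) z = 0.
  apply: (half0 hK2).
  transitivity ((Dl (brL x y) z + Dl (brL y z) x) - (Dl (brL y z) x + Dl (brL z x) y)
     + (Dl (brL z x) y + Dl (brL x y) z)); first by ring.
  by rewrite !R3 subrr addr0.
have HDl : forall z, lin (fun w => Dl w z).
  move=> z k a a' _ _; rewrite /Dl (F_lxE u v z k a a') (F_lxE (u * v) 1 z k a a').
  by rewrite !scaleK; ring.
have := perf0 hLp (HDl q) (fun x y => key x y q) p.
by move/eqP; rewrite /Dl subr_eq0 => /eqP.
Qed.


Definition s (c : A) : L -> L -> K^o := fun x y => F c 1 x y.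

Lemma s_Z2 c : Z2comm brL (s c).
Proof.
split.
- by split => k a a' b _ _ _; rewrite /s ?F_lxE ?F_lyE.
- by move=> x y; rewrite /s Fsym2.
- move=> x y z; have := FC c 1 1 x y z.
  by rewrite !mulr1 !mul1r (F_sym 1 c) (Fsym2 c 1 x).
Qed.

Lemma s_lin : lin s.
Proof.
move=> k a a' _ _; apply/funext => x; apply/funext => y.
by rewrite fapp2 /s F_laE.
Qed.

Lemma s_linE k a a' : s (k *: a + a') = k *: s a + s a'.
Proof. exact: (s_lin k I I). Qed.

Lemma F_s a b x y : F a b x y = s (a * b) x y.
Proof. exact: Fprod. Qed.

Lemma s_X a b d : s (rho d a * b - a * rho d b) = 0.
Proof.
rewrite (linB s_lin); apply/funext => x; apply/funext => y.
have := FM a b d x y; rewrite M0 add0r => /eqP; rewrite subr_eq0 => /eqP e.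
rewrite opprfctE addrfctE /= opprfctE addrfctE /= -!F_s e F_sym subrr.
by [].
Qed.

Lemma bil_span0 n (e : 'I_n -> L) (f : L -> L -> K^o) :
  (forall v, exists c : 'I_n -> K, v = \sum_(i < n) c i *: e i) -> bilin f ->
  (forall i j, f (e i) (e j) = 0) -> forall x y, f x y = 0.
Proof.
move=> He Hf H0 x y.
case: (He x) => c ->; case: (He y) => c' ->.
rewrite (lin_sum _ (bilin1 Hf _)) big1 // => i _.
rewrite (linZ (bilin1 Hf _)) (lin_sum _ (bilin2 Hf _)) big1 ?scaler0 // => j _.
by rewrite (linZ (bilin2 Hf _)) H0 scaler0.
Qed.

Hypothesis hfd : findim L \/ findim A.

Lemma s_dec : exists m (bp : 'I_m -> A) (lam : 'I_m -> A -> K^o),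
  [/\ forall k, lin (lam k), (forall a, s a = 0 -> forall k, lam k a = 0) &
      forall a, s a = \sum_(k < m) lam k a *: s (bp k)].
Proof.
case: hfd => [[n [e He]]|[n [e He]]].
- pose r (a : A) : 'M[K]_n := \matrix_(i, j) s a (e i) (e j).
  have Hr : lin r.
    move=> k a a' _ _; apply/matrixP => i j; rewrite !mxE s_linE.
    by rewrite fapp2 !scaleK.
  have [m [bp [lam [Hl Hz Hs]]]] := decompV Hr.
  exists m, bp, lam; split => // [a ra|a].
    by apply: Hz; rewrite /r ra; apply/matrixP => i j; rewrite !mxE.
  have -> : \sum_(k < m) lam k a *: s (bp k) = s (\sum_(k < m) lam k a *: bp k).
    by rewrite (lin_sum _ s_lin); apply: eq_bigr => k _; rewrite (linZ s_lin).
  have Hb c : bilin (s c) by case: (s_Z2 c).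
  apply/funext => x; apply/funext => y; apply/eqP; rewrite -subr_eq0; apply/eqP.
  pose g := (-1) *: s (\sum_(k < m) lam k a *: bp k) + s a.
  have Hg : bilin g by apply: bilin_comb.
  have Z := bil_span0 He Hg.
  suff : g x y = 0 by rewrite /g fapp2 scaleK mulN1r addrC.
  apply: Z => i j; rewrite /g fapp2 scaleK mulN1r addrC; apply/eqP; rewrite subr_eq0; apply/eqP.
  have := congr1 (fun M : 'M[K]_n => M i j) (Hs a); rewrite /r mxE => ->.
  rewrite summxE (lin_sum _ s_lin) !fct_sumE; apply: eq_bigr => k _.
  by rewrite !mxE (linZ s_lin).
- pose h (c : 'rV[K]_n) : A := \sum_(j < n) c 0 j *: e j.
  have Hh : lin h.
    move=> k c c' _ _; rewrite /h scaler_sumr -big_split; apply: eq_bigr => j _.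
    by rewrite !mxE scalerDl scalerA.
  apply: (decomp (h := h)) => //; first exact: s_lin.
  move=> a; case: (He a) => c ->; exists (\row_j c j).
  by congr s; apply: eq_bigr => j _; rewrite mxE.
Qed.


Lemma psi_DD_Z2 : Z2comm brD (fun d e => psi (0, d) (0, e)).
Proof.
split.
- split => k u u' v _ _ _ /=; first by rewrite pairD_comb psiL1.
  by rewrite pairD_comb psiL2.
- by move=> d e; rewrite psi_sym.
- by move=> d e f; rewrite -!brDD; apply: psi_cyc.
Qed.

Lemma f1_zero t u : f1 t u 0 = 0 /\ f1 t 0 u = 0.
Proof.
case: (f1_good t) => Hb _ _ _.
by split; [exact: (lin0 (bilin2 Hb u)) | exact: (lin0 (bilin1 Hb u))].
Qed.

Lemma surj : exists u : (T1 * T2 * (D -> D -> K^o))%type,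
  Z2comm brD u.2 /\ Phi u = psi.
Proof.
have [m [bp [lam [Hl Hz He]]]] := s_dec.
have HX k : Xset rho (lam k).
  by split; [exact: Hl | move=> a b d; apply: Hz; apply: s_X].
have HS k : Z2comm brL (s (bp k)) by apply: s_Z2.
pose t1 := \sum_(k < m) tau1 (s (bp k)) (lam k).
pose q d e := psi (0, d) (0, e).
exists (t1, 0, q); split; first exact: psi_DD_Z2.
have q00 : q 0 0 = 0 by rewrite /q; have -> : ((0, 0) : (T * D)%type) = 0 by []; rewrite psi0l.
apply: (form_eqTD htau) => //.
- by apply: Phi_bil; exact: psi_DD_Z2.
- exact: psi_bil.
move=> X Y [[x [a ->]]|[d ->]] [[y [b ->]]|[e ->]]; rewrite /Phi /=.
- rewrite q00 addr0 /t1 (lin_sum _ f1_lin) !fct_sumE.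
  rewrite -/(F a b x y) F_s (He (a * b)) !fct_sumE; apply: eq_bigr => k _.
  rewrite f1_tau //; case: (HS k) => Hb _ _; case: (HX k) => Hx _.
  by rewrite (Bf_spec Hb Hx).2 mulrC.
- rewrite (f1_zero _ _).1 add0r -/(M x a e) M0 /q.
  by have -> : ((0, 0) : (T * D)%type) = 0 by []; rewrite psi0l.
- rewrite (f1_zero _ _).2 add0r psi_sym -/(M y b d) M0 /q.
  by rewrite psi_sym; have -> : ((0, 0) : (T * D)%type) = 0 by []; rewrite psi0l.
- by rewrite (f1_zero _ _).1 add0r.
Qed.

End Surj.


Lemma f1_inj t : f1 t = 0 -> t = 0.
Proof.
case: htau1 => _ /(_ t) [n [u [v [Huv ->]]]] _ H.
have Hv i : lin (v i) by case: (Huv i) => _ [].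
have Hu i : Z2comm brL (u i) by case: (Huv i).
have Hvx i : Xset rho (v i) by case: (Huv i).
pose r (a : A) : 'rV[K]_n := \row_i v i a.
have Hr : lin r.
  by move=> k a a' _ _; apply/rowP => i; rewrite !mxE (Hv i k a a' I I).
have [m [bp [lam [Hl Hz Hre]]]] := decompV Hr.
have HX k : Xset rho (lam k).
  split; first exact: Hl.
  move=> a b d; apply: Hz; apply/rowP => i; rewrite !mxE.
  by case: (Hvx i) => _ ->.
have vexp i : v i = \sum_(k < m) v i (bp k) *: lam k.
  apply/funext => a; rewrite fct_sumE.
  have := congr1 (fun M : 'rV[K]_n => M 0 i) (Hre a); rewrite /r mxE => ->.
  by rewrite summxE; apply: eq_bigr => k _; rewrite !mxE mulrC.
have key k : \sum_(i < n) v i (bp k) *: u i = 0.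
  apply/funext => x; apply/funext => y; rewrite !fct_sumE.
  have := congr1 (fun f => f (tau x (bp k)) (tau y 1)) H.
  rewrite (lin_sum _ f1_lin) !fct_sumE => e.
  rewrite -[RHS]e; apply: eq_bigr => i _.
  have Hub : bilin (u i) by case: (Hu i).
  rewrite f1_tau // (Bf_spec Hub (Hv i)).2 mulr1.
  by rewrite scalrfctE scalrfctE scaleK mulrC.
transitivity (\sum_(i < n) \sum_(k < m) v i (bp k) *: tau1 (u i) (lam k)).
  apply: eq_bigr => i _; rewrite {1}(vexp i).
  exact: (tens_sum2 htau1 X_sub).
rewrite exchange_big /=; apply: big1 => k _.
rewrite -(tens_sum1 htau1 Z2_sub) // key.
exact: (tens01 htau1 Z2_sub).
Qed.

Variables (tau2 : (L -> L -> K^o) -> (A -> A -> K^o) -> T2).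
Hypothesis htau2 : is_tensor (Cform brL) (Yset rho) tau2.

Lemma T2_zero (t : T2) : t = 0.
Proof.
move: t; apply: (tens_ind htau2 (P := fun t => t = 0)) => [//|u v -> ->|u v Hu Hv]; first by rewrite addr0.
have e := Cform0 hK2 hL hLp Hu.
have e0 : (fun _ _ => 0) = (0 : L -> L -> K^o) by [].
rewrite e e0 in Hu *.
case: htau2 => [[H1 _] _ _].
have := H1 1 0 0 v Hu Hu Hv; rewrite !scale1r addr0 => e1.
by apply: (addrI (tau2 0 v)); rewrite addr0 -e1.
Qed.

Hypothesis hfd : findim L \/ findim A.

Lemma main_iso : exists Phi' : (T1 * T2 * (D -> D -> K^o))%type -> ((T * D)%type -> (T * D)%type -> K^o),
    lin_iso_on (fun p => Z2comm brD p.2) (Z2comm br) Phi'.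
Proof.
exists Phi; split.
- move=> k u u' Hu Hu'; apply/funext => X; apply/funext => Y.
  rewrite /Phi.
  have -> : (k *: u + u').1.1 = k *: u.1.1 + u'.1.1 by [].
  rewrite (f1_lin k I I).
  have -> : (k *: u + u').2 = k *: u.2 + u'.2 by [].
  by rewrite !fapp2 /= !scaleK; ring.
- move=> [[t1 t2] q] [[t1' t2'] q'] /= Hq Hq' E.
  have eq : q = q'.
    apply/funext => d; apply/funext => e.
    have := congr1 (fun f => f (0, d) (0, e)) E; rewrite /Phi /=.
    by rewrite !(f1_zero _ _).1 !add0r.
  have q0 : forall (qq : D -> D -> K^o), Z2comm brD qq -> qq 0 0 = 0.
    by move=> qq [Hb _ _]; apply: (lin0 (bilin1 Hb 0)).
  have E1 : f1 t1 = f1 t1'.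
    apply/funext => t; apply/funext => t'.
    have := congr1 (fun f => f (t, 0) (t', 0)) E; rewrite /Phi /=.
    by rewrite (q0 _ Hq) (q0 _ Hq') !addr0.
  have et : t1 = t1'.
    apply/eqP; rewrite -subr_eq0; apply/eqP; apply: f1_inj.
    by rewrite (linB f1_lin) E1 subrr.
  by rewrite et eq (T2_zero t2) (T2_zero t2').
- move=> w; split.
  + move=> hw; have [u [Hu <-]] := surj hw hfd.
    by exists u.
  + by move=> [u [Hu <-]]; apply: Phi_Z2.
Qed.

End Main.


End Aux.
Import Aux.

Theorem lemma5p3 (K : fieldType)
  (hK2 : (2 \notin [pchar K])%N) (hK3 : (3 \notin [pchar K])%N)
  (L : lmodType K) (brL : L -> L -> L) (hL : is_lie brL) (hLp : perfect brL)
  (A : comAlgType K) (hfd : findim L \/ findim A)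
  (D : lmodType K) (brD : D -> D -> D) (rho : D -> A -> A)
  (hD : der_subalg brD rho)
  (T : lmodType K) (tau : L -> A -> T)
  (htau : is_tensor (fun _ => True) (fun _ => True) tau)
  (br : (T * D)%type -> (T * D)%type -> (T * D)%type)
  (hbr : semidirect_bracket brL brD rho tau br)
  (T1 : lmodType K) (tau1 : (L -> L -> K^o) -> (A -> K^o) -> T1)
  (htau1 : is_tensor (Z2comm brL) (Xset rho) tau1)
  (T2 : lmodType K) (tau2 : (L -> L -> K^o) -> (A -> A -> K^o) -> T2)
  (htau2 : is_tensor (Cform brL) (Yset rho) tau2) :
  exists Phi : (T1 * T2 * (D -> D -> K^o))%type -> ((T * D)%type -> (T * D)%type -> K^o),
    lin_iso_on (fun p => Z2comm brD p.2) (Z2comm br) Phi.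
Proof.
exact: (main_iso hK2 hL hLp hD htau hbr htau1 htau2 hfd).
Qed.
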